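(* For any graph $G=G_1\sqcup G_2$ with no edges connecting $G_1$ to $G_2$, we have $\lfloor \mathrm{sp}\rfloor(G)=\lfloor \mathrm{sp}\rfloor(G_1)+\lfloor \mathrm{sp}\rfloor(G_2)$.
   Context: All graphs are finite, have at least one vertex, have no loops, and may have multiple (parallel) edges. A unique shortest path is a shortest $u$–$v$ path $P$ such that every $u$–$v$ path with the same number of vertices is identical to $P$, where two paths with different edge sequences are different even if their vertex sequences agree; a single vertex is a unique shortest path. The parade number $\mathrm{usp}(G)$ is the largest number of vertices of a unique shortest path in $G$. The spectator number is $\mathrm{sp}(G)=|V(G)|-\mathrm{usp}(G)$. A minor of $H$ is any graph obtained from $H$ by a sequence of: deleting an isolated vertex, deleting an edge, contracting an edge that has no edge parallel to it. The spectator floor $\lfloor \mathrm{sp}\rfloor(G)$ is the minimum of $\mathrm{sp}(H)$ over all graphs $H$ of which $G$ is a minor. *)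

(* Defs.v *)
From Stdlib Require Import ClassicalEpsilon.
From mathcomp Require Import all_boot.
Set Implicit Arguments. Unset Strict Implicit. Unset Printing Implicit Defensive.

(* A multigraph: vertices 'I_nv, edges 'I_ne, each edge has an (unordered)
   pair of ends, stored as an ordered pair. *)
Record mgraph := MGraph {
  nv : nat;
  ne : nat;
  ends : 'I_ne -> 'I_nv * 'I_nv }.
Arguments ends : clear implicits.

Definition wf (G : mgraph) : bool :=
  (0 < nv G) && [forall e, (ends G e).1 != (ends G e).2].

Definition same_ends (T : eqType) (p q : T * T) : bool :=
  (p == q) || (p == (q.2, q.1)).

Definition mapp (A B : Type) (f : A -> B) (p : A * A) : B * B := (f p.1, f p.2).

Fixpoint walk (G : mgraph) (x : 'I_(nv G)) (s : seq ('I_(ne G) * 'I_(nv G))) : bool :=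
  match s with
  | [::] => true
  | p :: s' => same_ends (ends G p.1) (x, p.2) && walk p.2 s'
  end.

(* a path: a walk without repeated vertices; it has (size s).+1 vertices *)
Definition is_path (G : mgraph) (x : 'I_(nv G)) (s : seq ('I_(ne G) * 'I_(nv G))) : bool :=
  walk x s && uniq (x :: map snd s).

Definition endp (G : mgraph) (x : 'I_(nv G)) (s : seq ('I_(ne G) * 'I_(nv G))) : 'I_(nv G) :=
  last x (map snd s).

Definition is_usp (G : mgraph) (x : 'I_(nv G)) (s : seq ('I_(ne G) * 'I_(nv G))) : Prop :=
  is_path x s /\
  (forall s', is_path x s' -> endp x s' = endp x s -> size s <= size s') /\
  (forall s', is_path x s' -> endp x s' = endp x s -> size s' = size s -> s' = s).

Definition pbool (P : Prop) : bool :=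
  if excluded_middle_informative P then true else false.

Definition usp (G : mgraph) : nat :=
  \max_(k < (nv G).+1)
     (if pbool (exists (x : 'I_(nv G)) s, is_usp x s /\ (size s).+1 = k) then nat_of_ord k else 0).

Definition sp (G : mgraph) : nat := nv G - usp G.

Definition iso (G H : mgraph) : Prop :=
  exists (f : 'I_(nv G) -> 'I_(nv H)) (g : 'I_(ne G) -> 'I_(ne H)),
    bijective f /\ bijective g /\
    forall e, same_ends (ends H (g e)) (mapp f (ends G e)).

Definition del_vertex (G H : mgraph) : Prop :=
  exists v : 'I_(nv H),
    (forall e, v != (ends H e).1 /\ v != (ends H e).2) /\
    exists (f : 'I_(nv G) -> 'I_(nv H)) (g : 'I_(ne G) -> 'I_(ne H)),
      injective f /\ (forall y, f y != v) /\ (forall x, x != v -> exists y, f y = x) /\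
      bijective g /\
      forall e, same_ends (ends H (g e)) (mapp f (ends G e)).

Definition del_edge (G H : mgraph) : Prop :=
  exists e0 : 'I_(ne H),
    exists (f : 'I_(nv G) -> 'I_(nv H)) (g : 'I_(ne G) -> 'I_(ne H)),
      bijective f /\
      injective g /\ (forall e, g e != e0) /\ (forall e, e != e0 -> exists e', g e' = e) /\
      forall e, same_ends (ends H (g e)) (mapp f (ends G e)).

Definition contract (G H : mgraph) : Prop :=
  exists e0 : 'I_(ne H),
    (forall e, e != e0 -> ~~ same_ends (ends H e) (ends H e0)) /\
    exists (f : 'I_(nv H) -> 'I_(nv G)) (g : 'I_(ne G) -> 'I_(ne H)),
      (forall y, exists x, f x = y) /\
      (forall x y, f x = f y <-> (x = y \/ same_ends (x, y) (ends H e0))) /\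
      injective g /\ (forall e, g e != e0) /\ (forall e, e != e0 -> exists e', g e' = e) /\
      forall e, same_ends (ends G e) (mapp f (ends H (g e))).

Definition minor_step (G H : mgraph) : Prop :=
  wf G /\ (iso G H \/ del_vertex G H \/ del_edge G H \/ contract G H).

Inductive minor : mgraph -> mgraph -> Prop :=
  | minor_refl H : minor H H
  | minor_cons G K H : minor_step G K -> minor K H -> minor G H.

(* spectator floor: min of sp H over all graphs H of which G is a minor.
   For a graph G, sp G itself is attained (H = G), so restricting the
   minimum to values <= sp G is harmless. *)
Definition spfloor (G : mgraph) : nat :=
  \big[minn/sp G]_(k < (sp G).+1 | pbool (exists H, wf H /\ minor G H /\ sp H = k)) nat_of_ord k.

Definition dunion (G1 G2 : mgraph) : mgraph :=
  @MGraph (nv G1 + nv G2) (ne G1 + ne G2)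
    (fun e => match split e with
              | inl e1 => mapp (@lshift (nv G1) (nv G2)) (ends G1 e1)
              | inr e2 => mapp (@rshift (nv G1) (nv G2)) (ends G2 e2)
              end).

(* Main.v *)
Require Import Defs.
From mathcomp Require Import all_boot.
From mathcomp Require Import zify.
From Stdlib Require Import ClassicalEpsilon.
Set Implicit Arguments. Unset Strict Implicit. Unset Printing Implicit Defensive.

Lemma pboolP (P : Prop) : reflect P (pbool P).
Proof. rewrite /pbool; case: excluded_middle_informative => h; by constructor. Qed.

Lemma same_endsC (T : eqType) (p q : T * T) : same_ends p q = same_ends q p.
Proof.
case: p q => [a b] [c d]; rewrite /same_ends /= !xpair_eqE.
by apply/idP/idP => /orP [] /andP [] /eqP -> /eqP ->; rewrite !eqxx ?orbT.
Qed.

Lemma same_ends_refl (T : eqType) (p : T * T) : same_ends p p.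
Proof. by rewrite /same_ends eqxx. Qed.

Lemma same_ends_swap (T : eqType) (p : T * T) : same_ends p (p.2, p.1).
Proof. by case: p => a b; rewrite /same_ends /= eqxx orbT. Qed.

Lemma same_endsP (T : eqType) (p q : T * T) :
  reflect (p = q \/ p = (q.2, q.1)) (same_ends p q).
Proof. rewrite /same_ends; apply: (iffP orP); case=> /eqP; auto. Qed.

Lemma same_ends_trans (T : eqType) (p q r : T * T) :
  same_ends p q -> same_ends q r -> same_ends p r.
Proof.
case: p q r => [a b] [c d] [e f] /same_endsP [] [-> ->] /same_endsP [] [-> ->];
by rewrite /same_ends /= !eqxx ?orbT.
Qed.

Lemma same_ends_map (A B : eqType) (h : A -> B) p q :
  same_ends p q -> same_ends (mapp h p) (mapp h q).
Proof.
case: p q => [a b] [c d] /same_endsP [] [-> ->]; by rewrite /same_ends /mapp /= !eqxx ?orbT.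
Qed.

Lemma same_ends_inj (A B : eqType) (h : A -> B) p q : injective h ->
  same_ends (mapp h p) (mapp h q) = same_ends p q.
Proof.
move=> hi; apply/idP/idP; last exact: same_ends_map.
case: p q => [a b] [c d] /same_endsP [] [/hi -> /hi ->];
by rewrite /same_ends /= !eqxx ?orbT.
Qed.

Lemma mapp_comp (A B C : Type) (f : A -> B) (g : B -> C) p :
  mapp g (mapp f p) = mapp (g \o f) p.
Proof. by []. Qed.

Lemma inj_surj_bij (A B : Type) (f : A -> B) :
  injective f -> (forall y, exists x, f x = y) -> bijective f.
Proof.
move=> fi fs.
have g : forall y, {x | f x = y} by move=> y; apply: constructive_indefinite_description.
exists (fun y => sval (g y)).
- by move=> x; apply: fi; case: (g (f x)).
- by move=> y; case: (g y).
Qed.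

Lemma bij_surj (A B : Type) (f : A -> B) : bijective f -> forall y, exists x, f x = y.
Proof. by case=> g _ K y; exists (g y). Qed.

Lemma path_size (G : mgraph) x s : is_path (G:=G) x s -> size s < nv G.
Proof.
case/andP=> _ u.
have := max_card (mem (x :: map snd s)).
by rewrite (card_uniqP u) /= size_map card_ord.
Qed.

Lemma usp_ge (G : mgraph) x s : is_usp (G:=G) x s -> (size s).+1 <= usp G.
Proof.
move=> h; have hs := path_size (proj1 h).
rewrite /usp; apply: leq_trans (leq_bigmax (Ordinal (hs : (size s).+1 < (nv G).+1)))=> /=.
case: pboolP => // [[]]; by exists x, s.
Qed.

Lemma usp_single (G : mgraph) (x : 'I_(nv G)) : is_usp x [::].
Proof.
split; first by [].
split; first by [].
by move=> s' _ _; case: s'.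
Qed.

Lemma usp_attained (G : mgraph) : 0 < nv G ->
  exists x s, is_usp (G:=G) x s /\ (size s).+1 = usp G.
Proof.
move=> hn.
have x0 : 'I_(nv G) by exact: Ordinal hn.
have h1 : 1 <= usp G by apply: (usp_ge (usp_single x0)).
have [i0 e] := eq_bigmax (fun k : 'I_(nv G).+1 =>
  if pbool (exists (x : 'I_(nv G)) s, is_usp x s /\ (size s).+1 = k) then nat_of_ord k else 0)
  (ltac:(by rewrite card_ord)).
by move: h1; rewrite /usp e; case: pboolP.
Qed.

Lemma usp_le (G : mgraph) : usp G <= nv G.
Proof.
rewrite /usp; apply/bigmax_leqP => i _; case: pbool => //.
by rewrite -ltnS.
Qed.

Lemma spfloor_le_sp G : spfloor G <= sp G.
Proof.
rewrite /spfloor; apply: (big_ind (fun y => y <= sp G)) => //.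
- by move=> a b ha hb; rewrite geq_min ha.
- by move=> i _; rewrite -ltnS.
Qed.

Lemma bigmin_le (I : eqType) (r : seq I) (P : pred I) (F : I -> nat) x k :
  k \in r -> P k -> \big[minn/x]_(i <- r | P i) F i <= F k.
Proof.
elim: r => // a r IH; rewrite inE big_cons => /orP [/eqP <- -> | hk hP].
  by rewrite geq_minl.
case: (P a); last exact: IH.
by rewrite geq_min IH ?orbT.
Qed.

Lemma spfloor_le G H : wf H -> minor G H -> spfloor G <= sp H.
Proof.
move=> wH mGH.
case: (leqP (sp H) (sp G)) => hle; last by apply: leq_trans (spfloor_le_sp G) (ltnW hle).
have hk : sp H < (sp G).+1 by [].
rewrite /spfloor; apply: (@bigmin_le _ _ _ (fun k : 'I__ => nat_of_ord k) _ (Ordinal hk)).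
  exact: mem_index_enum.
by apply/pboolP; exists H.
Qed.

Lemma spfloor_attained G : wf G ->
  exists H, wf H /\ minor G H /\ sp H = spfloor G.
Proof.
move=> wG; rewrite /spfloor.
apply: (big_ind (fun y => exists H, wf H /\ minor G H /\ sp H = y)).
- by exists G; split=> //; split=> //; exact: minor_refl.
- by move=> a b ha hb /=; rewrite /minn; case: ltnP.
- by move=> i /pboolP.
Qed.

Lemma minor_trans A B C : minor A B -> minor B C -> minor A C.
Proof.
elim=> [//|G K H st _ IH] hc; apply: minor_cons st (IH hc).
Qed.

Lemma minor1 A B : minor_step A B -> minor A B.
Proof. by move=> st; apply: minor_cons st (minor_refl _). Qed.

Lemma step_nv A B : minor_step A B -> 0 < nv B.
Proof.
case=> /andP [hA _] [|[|[|]]].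
- case=> f [g [fb _]].
  have x0 : 'I_(nv A) by exact: Ordinal hA.
  by have := ltn_ord (f x0); apply: leq_ltn_trans.
- case=> v _; by have := ltn_ord v; apply: leq_ltn_trans.
- case=> e [f _]; have x0 : 'I_(nv A) by exact: Ordinal hA.
  by have := ltn_ord (f x0); apply: leq_ltn_trans.
- case=> e [_ [f [g [fs _]]]].
  have x0 : 'I_(nv A) by exact: Ordinal hA.
  case: (fs x0) => y _; by have := ltn_ord y; apply: leq_ltn_trans.
Qed.

Lemma wf_iso G H : iso G H -> wf H -> wf G.
Proof.
case=> f [g [[f' fK Kf] [_ he]]] /andP [hn /forallP hl].
apply/andP; split.
- have y0 : 'I_(nv H) by exact: Ordinal hn.
  by have := ltn_ord (f' y0); apply: leq_ltn_trans.
- apply/forallP => e; apply/negP => /eqP eq.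
  move: (he e) (hl (g e)); case: (ends H (g e)) => a b /=.
  rewrite /mapp; case: (ends G e) eq => c d /= -> /same_endsP [] [-> ->];
  by rewrite eqxx.
Qed.

Lemma iso_step G H : iso G H -> wf H -> minor_step G H.
Proof. move=> i w; split; [exact: wf_iso i w | by left]. Qed.


Notation steps G := (seq ('I_(ne G) * 'I_(nv G))).

Definition emb (A B : mgraph) (hv : 'I_(nv A) -> 'I_(nv B)) (he : 'I_(ne A) -> 'I_(ne B)) :=
  [/\ injective hv, injective he & forall e, ends B (he e) = mapp hv (ends A e)].

Definition mapS (A B : mgraph) (hv : 'I_(nv A) -> 'I_(nv B)) (he : 'I_(ne A) -> 'I_(ne B))
  (s : seq ('I_(ne A) * 'I_(nv A))) := map (fun p => (he p.1, hv p.2)) s.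

Section Emb.
Variables (A B : mgraph) (hv : 'I_(nv A) -> 'I_(nv B)) (he : 'I_(ne A) -> 'I_(ne B)).
Hypothesis hemb : emb hv he.

Lemma walk_emb x s : walk (hv x) (mapS hv he s) = walk x s.
Proof.
case: hemb => iv ie hE.
elim: s x => //= [[e w] s IH] x /=; rewrite IH hE.
by rewrite -[(hv x, hv w)]/(mapp hv (x, w)) same_ends_inj.
Qed.

Lemma path_emb x s : is_path (hv x) (mapS hv he s) = is_path x s.
Proof.
case: hemb => iv ie hE.
rewrite /is_path walk_emb /mapS -map_comp.
have -> : [seq (snd \o (fun p => (he p.1, hv p.2))) i | i <- s] = map hv (map snd s).
  by rewrite -map_comp.
by rewrite -(map_cons hv) (map_inj_uniq iv).
Qed.

Lemma endp_emb x s : endp (hv x) (mapS hv he s) = hv (endp x s).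
Proof.
rewrite /endp /mapS -map_comp.
have -> : [seq (snd \o (fun p => (he p.1, hv p.2))) i | i <- s] = map hv (map snd s).
  by rewrite -map_comp.
by rewrite last_map.
Qed.

Lemma mapS_inj : injective (mapS hv he).
Proof.
case: hemb => iv ie _; apply: inj_map => [[e w] [e' w']] [] /ie -> /iv -> //.
Qed.

Lemma usp_emb x s : is_usp (hv x) (mapS hv he s) -> is_usp x s.
Proof.
case=> hp [hmin huniq]; rewrite path_emb in hp; split=> //; split.
- move=> s' hp' he'; rewrite -(size_map (fun p => (he p.1, hv p.2)) s).
  rewrite -(size_map (fun p => (he p.1, hv p.2)) s').
  by apply: hmin; rewrite ?path_emb // !endp_emb he'.
- move=> s' hp' he' hs; apply: mapS_inj; apply: huniq.
  + by rewrite path_emb.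
  + by rewrite !endp_emb he'.
  + by rewrite /mapS !size_map.
Qed.
End Emb.

Section Sub.
Variables (G : mgraph) (S : {set 'I_(nv G)}) (E : {set 'I_(ne G)}).

Definition inS (e : 'I_(ne G)) := ((ends G e).1 \in S) && ((ends G e).2 \in S).
Definition sv := {x : 'I_(nv G) | x \in S}.
Definition se := {e : 'I_(ne G) | (e \in E) && inS e}.

Lemma se_l (e : se) : (ends G (val e)).1 \in S.
Proof. by case/andP: (valP e) => _ /andP []. Qed.
Lemma se_r (e : se) : (ends G (val e)).2 \in S.
Proof. by case/andP: (valP e) => _ /andP []. Qed.

Definition sub_ends (e : se) : sv * sv :=
  (exist (fun x => x \in S) _ (se_l e), exist (fun x => x \in S) _ (se_r e)).

Definition sub : mgraph :=
  @MGraph #|{: sv}| #|{: se}| (fun e => mapp (@enum_rank _) (sub_ends (enum_val e))).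

Definition iv (x : 'I_(nv sub)) : 'I_(nv G) := val (enum_val x : sv).
Definition ie (e : 'I_(ne sub)) : 'I_(ne G) := val (enum_val e : se).

Lemma ends_sub e : mapp iv (ends sub e) = ends G (ie e).
Proof.
rewrite /iv /ie /= /mapp /= !enum_rankK /=.
by case: (ends G _).
Qed.

Lemma iv_inj : injective iv.
Proof. by move=> x y /val_inj /enum_val_inj. Qed.
Lemma ie_inj : injective ie.
Proof. by move=> x y /val_inj /enum_val_inj. Qed.

Lemma emb_sub : emb iv ie.
Proof. split; [exact: iv_inj | exact: ie_inj | by move=> e; rewrite ends_sub]. Qed.

Lemma ivS x : iv x \in S.
Proof. exact: (valP (enum_val x : sv)). Qed.

Lemma ivP y : y \in S -> exists x : 'I_(nv sub), iv x = y.
Proof.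
move=> hy; exists (enum_rank (exist (fun x => x \in S) y hy)).
by rewrite /iv enum_rankK.
Qed.

Lemma ieE e : (ie e \in E) && inS (ie e).
Proof. exact: (valP (enum_val e : se)). Qed.

Lemma ieP f : f \in E -> inS f -> exists e : 'I_(ne sub), ie e = f.
Proof.
move=> h1 h2; have h : (f \in E) && inS f by rewrite h1 h2.
exists (enum_rank (exist (fun e => (e \in E) && inS e) f h)).
by rewrite /ie enum_rankK.
Qed.

Lemma nv_sub : nv sub = #|S|.
Proof. by rewrite /= card_sig. Qed.
End Sub.

Arguments sub : clear implicits.
Arguments iv {G S E}.
Arguments ie {G S E}.

Lemma wf_sub G (S : {set 'I_(nv G)}) (E : {set 'I_(ne G)}) : wf G -> S != set0 -> wf (sub G S E).
Proof.
case/andP=> _ /forallP hl hS; apply/andP; split.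
  by rewrite nv_sub card_gt0.
apply/forallP => e; apply/negP => /eqP h.
have := hl (ie e); rewrite -ends_sub.
by case: (ends _ e) h => a b /= ->; rewrite eqxx.
Qed.

Lemma sub_vmap G1 G2 (S1 : {set 'I_(nv G1)}) (E1 : {set 'I_(ne G1)}) (S2 : {set 'I_(nv G2)}) (E2 : {set 'I_(ne G2)}) (h : 'I_(nv G1) -> 'I_(nv G2)) :
  (forall x, x \in S1 -> h x \in S2) ->
  exists h' : 'I_(nv (sub G1 S1 E1)) -> 'I_(nv (sub G2 S2 E2)),
    forall x, iv (h' x) = h (iv x).
Proof.
move=> hS.
exists (fun x => enum_rank (exist (fun y => y \in S2) (h (iv x)) (hS _ (ivS x)))).
by move=> x; rewrite /iv /= enum_rankK.
Qed.

Lemma sub_emap G1 G2 (S1 : {set 'I_(nv G1)}) (E1 : {set 'I_(ne G1)}) (S2 : {set 'I_(nv G2)}) (E2 : {set 'I_(ne G2)}) (h : 'I_(ne G1) -> 'I_(ne G2)) :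
  (forall e, (e \in E1) && inS S1 e -> (h e \in E2) && inS S2 (h e)) ->
  exists h' : 'I_(ne (sub G1 S1 E1)) -> 'I_(ne (sub G2 S2 E2)),
    forall e, ie (h' e) = h (ie e).
Proof.
move=> hS.
exists (fun e => enum_rank (exist (fun y => (y \in E2) && inS S2 y) (h (ie e)) (hS _ (ieE e)))).
by move=> e; rewrite /ie /= enum_rankK.
Qed.

Lemma lift_walk G (S : {set 'I_(nv G)}) (E : {set 'I_(ne G)}) (x' : 'I_(nv (sub G S E))) s :
  walk (iv x') s -> (forall p, p \in s -> (p.2 \in S) && (p.1 \in E)) ->
  exists s' : steps (sub G S E), mapS iv ie s' = s.
Proof.
elim: s x' => [|[e w] s IH] x' /=; first by exists [::].
case/andP=> hse hw hall.
have /andP [hwS heE] := hall _ (mem_head _ _).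
have [w' ew] := ivP E hwS.
have hin : inS S e.
  move: hse; rewrite /inS; case/same_endsP => ->; rewrite /= ?ivS hwS //.
have [e' ee] := ieP heE hin.
have [s' es] : exists s' : steps (sub G S E), mapS iv ie s' = s.
  apply: (IH w'); first by rewrite ew.
  by move=> p hp; apply: hall; rewrite inE hp orbT.
by exists ((e', w') :: s'); rewrite /= ee ew es.
Qed.


Lemma mapp_iv_comm (A B : Type) (f' : A -> A) (iv : A -> B) p :
  (forall x, iv (f' x) = iv x) -> mapp iv (mapp f' p) = mapp iv p.
Proof. by move=> h; case: p => a b; rewrite /mapp /= !h. Qed.

Lemma mapp_id (T : Type) (p : T * T) : mapp id p = p.
Proof. by case: p. Qed.

Lemma sub_se A (SA : {set 'I_(nv A)}) (EA : {set 'I_(ne A)})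
  B (SB : {set 'I_(nv B)}) (EB : {set 'I_(ne B)})
  (f : 'I_(nv B) -> 'I_(nv A)) (f' : 'I_(nv (sub B SB EB)) -> 'I_(nv (sub A SA EA))) a b :
  (forall x, iv (f' x) = f (iv x)) ->
  same_ends (ends A (ie a)) (mapp f (ends B (ie b))) ->
  same_ends (ends (sub A SA EA) a) (mapp f' (ends (sub B SB EB) b)).
Proof.
move=> hf h; rewrite -(same_ends_inj _ _ (@iv_inj A SA EA)) ends_sub.
suff -> : mapp iv (mapp f' (ends (sub B SB EB) b)) = mapp f (ends B (ie b)) by [].
rewrite -ends_sub; case: (ends _ b) => x y; by rewrite /mapp /= !hf.
Qed.

Lemma inS_fw A B (SA : {set 'I_(nv A)}) (SB : {set 'I_(nv B)}) (f : 'I_(nv A) -> 'I_(nv B)) ea eb :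
  same_ends (ends B eb) (mapp f (ends A ea)) -> inS SA ea ->
  (forall x, x \in SA -> f x \in SB) -> inS SB eb.
Proof.
rewrite /inS; case: (ends A ea) => a b; case: (ends B eb) => c d /=.
case/same_endsP => [] [-> ->] /andP [ha hb] hf; by rewrite !hf.
Qed.

Lemma inS_bw A B (SA : {set 'I_(nv A)}) (SB : {set 'I_(nv B)}) (f : 'I_(nv A) -> 'I_(nv B)) ea eb :
  same_ends (ends B eb) (mapp f (ends A ea)) -> inS SB eb ->
  (forall x, f x \in SB -> x \in SA) -> inS SA ea.
Proof.
rewrite /inS; case: (ends A ea) => a b; case: (ends B eb) => c d /=.
case/same_endsP => [] [-> ->] /andP [ha hb] hf; by rewrite !hf.
Qed.

Lemma sub_minor G (S : {set 'I_(nv G)}) (F : {set 'I_(ne G)}) :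
  wf G -> S != set0 -> {in F, forall e, inS S e} ->
  forall (S' : {set 'I_(nv G)}) (F' : {set 'I_(ne G)}), S \subset S' -> F \subset F' -> {in F', forall e, inS S' e} ->
  minor (sub G S F) (sub G S' F').
Proof.
move=> wG hS hF S' F'.
move: {2}(#|S'| + #|F'|) (leqnn (#|S'| + #|F'|)) => n.
elim: n S' F' => [|n IH] S' F' hn hSS hFF hF'.
- have : #|S| <= 0 by apply: leq_trans (subset_leq_card hSS) _; lia.
  by rewrite leqn0 cards_eq0 (negbTE hS).
have hsup : forall T : {set 'I_(nv G)}, S \subset T -> T != set0.
  by move=> T hT; case/set0Pn: hS => x hx; apply/set0Pn; exists x; apply: (subsetP hT).
have hS' : S' != set0 by apply: hsup.
case: (boolP (F' \subset F)) => hF'F.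
- have eF : F = F' by apply/eqP; rewrite eqEsubset hFF hF'F.
  subst F'.
  case: (boolP (S' \subset S)) => hS'S.
    have -> : S' = S by apply/eqP; rewrite eqEsubset hS'S hSS.
    exact: minor_refl.
  have [v hv] : exists v, v \in S' :\: S.
    apply/set0Pn; rewrite setD_eq0 //.
  move: hv; rewrite inE => /andP [hvS hvS'].
  set S'' := S' :\ v.
  have hSS'' : S \subset S''.
    apply/subsetP => x hx; rewrite !inE (subsetP hSS _ hx) andbT.
    by apply: contraNneq hvS => <-.
  have hcard : #|S''| < #|S'| by rewrite (cardsD1 v S') hvS' add1n ltnSn.
  apply: minor_trans (IH S'' F _ hSS'' hFF _) _.
  + lia.
  + move=> e he; move: (hF e he); rewrite /inS => /andP [h1 h2].
    by rewrite (subsetP hSS'' _ h1) (subsetP hSS'' _ h2).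
  apply: minor1; split.
    by apply: wf_sub => //; apply: hsup.
  right; left.
  have [v' ev] := ivP F hvS'.
  exists v'; split.
  + move=> e; have := hF _ (proj1 (andP (ieE e))); rewrite /inS -ends_sub.
    case: (ends (sub G S' F) e) => a b /= /andP [ha hb].
    split; apply/negP => /eqP ee.
      by move: ha; rewrite -ee ev (negbTE hvS).
    by move: hb; rewrite -ee ev (negbTE hvS).
  have [f hf] := @sub_vmap G G S'' F S' F id (fun x hx => subsetP (subD1set S' v) x hx).
  have [g hg] := @sub_emap G G S'' F S' F id
     (fun e he => ltac:(move: he => /andP [h1 h2]; rewrite h1 /=;
                        move: h2; rewrite /inS => /andP [a b];
                        by rewrite (subsetP (subD1set S' v) _ a) (subsetP (subD1set S' v) _ b))).
  exists f, g; split; [|split; [|split; [|split]]].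
  + by move=> x y /(congr1 iv); rewrite !hf => /iv_inj.
  + move=> y; apply/negP => /eqP /(congr1 iv); rewrite hf ev /= => e.
    by have := ivS y; rewrite /S'' -/(iv y) e !inE eqxx.
  + move=> x hx; have hx' : iv x \in S''.
      by rewrite !inE ivS andbT; apply: contra_neq hx => e; apply: iv_inj; rewrite e ev.
    have [y ey] := ivP F hx'; exists y; apply: iv_inj; by rewrite hf ey.
  + apply: inj_surj_bij.
      by move=> x y /(congr1 ie); rewrite !hg => /ie_inj.
    move=> e; have /andP [h1 h2] := ieE e.
    have h2' : inS S'' (ie e).
      by move: (hF _ h1); rewrite /inS => /andP [a b]; rewrite (subsetP hSS'' _ a) (subsetP hSS'' _ b).
    have [e' ee'] := ieP h1 h2'; exists e'; apply: ie_inj; by rewrite hg ee'.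
  + move=> e; apply: (sub_se (f := id) hf); rewrite hg mapp_id; exact: same_ends_refl.
-
  have [e0 he0] : exists e0, e0 \in F' :\: F.
    by apply/set0Pn; rewrite setD_eq0.
  move: he0; rewrite inE => /andP [he0F he0F'].
  set F'' := F' :\ e0.
  have hFF'' : F \subset F''.
    apply/subsetP => x hx; rewrite !inE (subsetP hFF _ hx) andbT.
    by apply: contraNneq he0F => <-.
  have hcard : #|F''| < #|F'| by rewrite (cardsD1 e0 F') he0F' add1n ltnSn.
  apply: minor_trans (IH S' F'' _ hSS hFF'' _) _.
  + lia.
  + by move=> e; rewrite !inE => /andP [_ he]; apply: hF'.
  apply: minor1; split; first exact: wf_sub.
  right; right; left.
  have [e0' ee0] := ieP he0F' (hF' _ he0F').
  exists e0'.
  have [f hf] := @sub_vmap G G S' F'' S' F' id (fun x hx => hx).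
  have [g hg] := @sub_emap G G S' F'' S' F' id
     (fun e he => ltac:(move: he => /andP [h1 h2]; rewrite h2 andbT;
                        exact: (subsetP (subD1set F' e0) _ h1))).
  exists f, g; split; [|split; [|split; [|split]]].
  + apply: inj_surj_bij.
      by move=> x y /(congr1 iv); rewrite !hf => /iv_inj.
    move=> y; have [x ex] := ivP F'' (ivS y); exists x; apply: iv_inj; by rewrite hf.
  + by move=> x y /(congr1 ie); rewrite !hg => /ie_inj.
  + move=> e; apply/negP => /eqP /(congr1 ie); rewrite hg ee0 /= => ee.
    by have := proj1 (andP (ieE e)); rewrite ee !inE eqxx.
  + move=> e hne.
    have h1 : ie e \in F''.
      rewrite !inE (proj1 (andP (ieE e))) andbT.
      by apply: contra_neq hne => h; apply: ie_inj; rewrite h ee0.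
    have [e' ee'] := ieP h1 (proj2 (andP (ieE e))); exists e'; apply: ie_inj; by rewrite hg.
  + move=> e; apply: (sub_se (f := id) hf); rewrite hg mapp_id; exact: same_ends_refl.
Qed.


Definition within G (S : {set 'I_(nv G)}) := [set e | inS S e].
Definition R G (S : {set 'I_(nv G)}) := sub G S (within S).
Arguments R : clear implicits.
Definition lab G (nu : 'I_(nv G) -> bool) b := [set x | nu x == b].

Lemma inW G (S : {set 'I_(nv G)}) e : ((e \in within S) && inS S e) = inS S e.
Proof. by rewrite inE andbb. Qed.

Lemma ieR G (S : {set 'I_(nv G)}) (e : 'I_(ne (R G S))) : inS S (ie e).
Proof. by have := ieE e; rewrite inW. Qed.

Lemma iePR G (S : {set 'I_(nv G)}) f : inS S f -> exists e : 'I_(ne (R G S)), ie e = f.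
Proof. by move=> h; apply: ieP => //; rewrite inE. Qed.

Lemma lab_ne G (nu : 'I_(nv G) -> bool) b : (exists x, nu x = b) -> lab nu b != set0.
Proof. by case=> x hx; apply/set0Pn; exists x; rewrite inE hx. Qed.

Lemma wf_R G (nu : 'I_(nv G) -> bool) b : wf G -> (exists x, nu x = b) -> wf (R G (lab nu b)).
Proof. by move=> w h; apply: wf_sub w (lab_ne h). Qed.

Lemma sub_iso G K (SG : {set 'I_(nv G)}) (SK : {set 'I_(nv K)}) f g :
  injective f -> (forall x, (f x \in SK) = (x \in SG)) ->
  (forall y, y \in SK -> exists x, f x = y) ->
  injective g -> (forall e', inS SK e' -> exists e, g e = e') ->
  (forall e, same_ends (ends K (g e)) (mapp f (ends G e))) ->
  iso (R G SG) (R K SK).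
Proof.
move=> fi fS fs gi gs he.
have [f' hf'] := @sub_vmap G K SG (within SG) SK (within SK) f (fun x hx => ltac:(by rewrite fS)).
have [g' hg'] := @sub_emap G K SG (within SG) SK (within SK) g
  (fun e he' => ltac:(rewrite inW in he'; rewrite inW;
     by apply: (inS_fw (he e) he') => x hx; rewrite fS)).
exists f', g'; split; [|split].
- apply: inj_surj_bij.
    by move=> x y /(congr1 iv); rewrite !hf' => /fi /iv_inj.
  move=> y; have [x ex] := fs _ (ivS y).
  have hx : x \in SG by rewrite -fS ex ivS.
  have [x' ex'] := ivP (within SG) hx; exists x'; apply: iv_inj; by rewrite hf' ex' ex.
- apply: inj_surj_bij.
    by move=> x y /(congr1 ie); rewrite !hg' => /gi /ie_inj.
  move=> e'; have [e ee] := gs _ (ieR e').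
  have hin : inS SG e.
    apply: (inS_bw (he e)); first by rewrite ee; exact: ieR.
    by move=> x; rewrite fS.
  have [e'' ee''] := iePR hin; exists e''; apply: ie_inj; by rewrite hg' ee'' ee.
- move=> e; apply: (sub_se (f := f) hf'); rewrite hg'; exact: he.
Qed.

Section Cases.
Variables (G K : mgraph) (nu : 'I_(nv G) -> bool).
Hypothesis wG : wf G.

Definition rs_concl :=
  exists mu : 'I_(nv K) -> bool, forall b, (exists x, nu x = b) ->
    minor_step (R G (lab nu b)) (R K (lab mu b)).

Lemma rs_iso : iso G K -> rs_concl.
Proof.
case=> f [g [[fi fK Kf] [gb he]]].
exists (fun y => nu (fi y)) => b hb; split; first exact: wf_R.
left; apply: sub_iso he.
- exact: can_inj fK.
- by move=> x; rewrite !inE fK.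
- by move=> y _; exists (fi y).
- exact: bij_inj gb.
- by move=> e' _; apply: bij_surj.
Qed.

Lemma rs_delv : del_vertex G K -> rs_concl.
Proof.
case=> v [hv [f [g [fi [fv [fs [gb he]]]]]]].
pose mu y := pbool (exists x, f x = y /\ nu x).
have muf : forall x, mu (f x) = nu x.
  move=> x; rewrite /mu; case: pboolP => [[x' [/fi -> ->]] //|h].
  by case: (boolP (nu x)) => // hx; case: h; exists x.
exists mu => b hb; split; first exact: wf_R.
case: (boolP (mu v == b)) => hvb.
-
  right; left.
  have hvT : v \in lab mu b by rewrite inE.
  have [v' ev] := ivP (within (lab mu b)) hvT.
  exists v'; split.
    move=> e; have := hv (ie e); rewrite -ends_sub -ev.
    case: (ends (R K (lab mu b)) e) => a c /= [h1 h2].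
    by split; [apply: contra_neq h1 => -> | apply: contra_neq h2 => ->].
  have [f' hf'] := @sub_vmap G K (lab nu b) (within (lab nu b)) (lab mu b) (within (lab mu b)) f
     (fun x hx => ltac:(by rewrite inE muf; rewrite inE in hx)).
  have [g' hg'] := @sub_emap G K (lab nu b) (within (lab nu b)) (lab mu b) (within (lab mu b)) g
    (fun e he' => ltac:(rewrite inW in he'; rewrite inW;
       by apply: (inS_fw (he e) he') => x; rewrite !inE muf)).
  exists f', g'; split; [|split; [|split; [|split]]].
  + by move=> x y /(congr1 iv); rewrite !hf' => /fi /iv_inj.
  + move=> y; apply/negP => /eqP /(congr1 iv); rewrite hf' ev; apply/eqP; exact: fv.
  + move=> x hx; have hx' : iv x != v by apply: contra_neq hx => h; apply: iv_inj; rewrite h ev.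
    have [y ey] := fs _ hx'.
    have hy : y \in lab nu b by rewrite inE -muf ey; have := ivS x; rewrite inE.
    have [y' ey'] := ivP (within (lab nu b)) hy; exists y'; apply: iv_inj; by rewrite hf' ey' ey.
  + apply: inj_surj_bij.
      by move=> x y /(congr1 ie); rewrite !hg' => /(bij_inj gb) /ie_inj.
    move=> e'; have [e ee] := bij_surj gb (ie e').
    have hin : inS (lab nu b) e.
      apply: (inS_bw (he e)); first by rewrite ee; exact: ieR.
      by move=> x; rewrite !inE muf.
    have [e'' ee''] := iePR hin; exists e''; apply: ie_inj; by rewrite hg' ee'' ee.
  + move=> e; apply: (sub_se (f := f) hf'); rewrite hg'; exact: he.
- left; apply: sub_iso he.
  + exact: fi.
  + by move=> x; rewrite !inE muf.
  + move=> y hy; apply: fs; apply: contraNneq hvb => e; move: hy; by rewrite inE e.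
  + exact: bij_inj gb.
  + by move=> e' _; apply: bij_surj.
Qed.

Lemma rs_dele : del_edge G K -> rs_concl.
Proof.
case=> e0 [f [g [[fi fK Kf] [gi [ge0 [gs he]]]]]].
have muf : forall x, nu (fi (f x)) = nu x by move=> x; rewrite fK.
exists (fun y => nu (fi y)) => b hb; split; first exact: wf_R.
set T := lab (fun y => nu (fi y)) b.
case: (boolP (inS T e0)) => he0.
- right; right; left.
  have [e0' ee0] := iePR he0.
  exists e0'.
  have [f' hf'] := @sub_vmap G K (lab nu b) (within (lab nu b)) T (within T) f
     (fun x hx => ltac:(by rewrite inE muf; rewrite inE in hx)).
  have [g' hg'] := @sub_emap G K (lab nu b) (within (lab nu b)) T (within T) g
    (fun e he' => ltac:(rewrite inW in he'; rewrite inW;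
       by apply: (inS_fw (he e) he') => x; rewrite !inE muf)).
  exists f', g'; split; [|split; [|split; [|split]]].
  + apply: inj_surj_bij.
      by move=> x y /(congr1 iv); rewrite !hf' => /(can_inj fK) /iv_inj.
    move=> y; have hy : fi (iv y) \in lab nu b by have := ivS y; rewrite !inE.
    have [x ex] := ivP (within (lab nu b)) hy; exists x; apply: iv_inj; by rewrite hf' ex Kf.
  + by move=> x y /(congr1 ie); rewrite !hg' => /gi /ie_inj.
  + move=> e; apply/negP => /eqP /(congr1 ie); rewrite hg' ee0; apply/eqP; exact: ge0.
  + move=> e' hne; have hne' : ie e' != e0.
      by apply: contra_neq hne => h; apply: ie_inj; rewrite h ee0.
    have [e ee] := gs _ hne'.
    have hin : inS (lab nu b) e.
      apply: (inS_bw (he e)); first by rewrite ee; exact: ieR.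
      by move=> x; rewrite !inE muf.
    have [e'' ee''] := iePR hin; exists e''; apply: ie_inj; by rewrite hg' ee'' ee.
  + move=> e; apply: (sub_se (f := f) hf'); rewrite hg'; exact: he.
- left; apply: sub_iso he.
  + exact: can_inj fK.
  + by move=> x; rewrite !inE muf.
  + by move=> y _; exists (fi y).
  + exact: gi.
  + move=> e' he'; apply: gs; by apply: contraNneq he0 => <-.
Qed.

Lemma rs_contract : contract G K -> rs_concl.
Proof.
case=> e0 [nopar [f [g [fs [fiff [gi [ge0 [gs he]]]]]]]].
exists (fun y => nu (f y)) => b hb; split; first exact: wf_R.
set T := lab (fun y => nu (f y)) b.
set S := lab nu b.
have [f' hf'] := @sub_vmap K G T (within T) S (within S) f
     (fun x hx => ltac:(by rewrite inE; rewrite inE in hx)).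
have [g' hg'] := @sub_emap G K S (within S) T (within T) g
    (fun e he' => ltac:(rewrite inW in he'; rewrite inW;
       by apply: (inS_bw (he e) he') => x; rewrite !inE)).
have f's : forall x, exists y, f' y = x.
  move=> x; have [y ey] := fs (iv x).
  have hy : y \in T by rewrite inE ey; have := ivS x; rewrite inE.
  have [y' ey'] := ivP (within T) hy; exists y'; apply: iv_inj; by rewrite hf' ey' ey.
have g'i : injective g' by move=> x y /(congr1 ie); rewrite !hg' => /gi /ie_inj.
have g's : forall e', ie e' != e0 -> exists e, g' e = e'.
  move=> e' hne'; have [e ee] := gs _ hne'.
  have hin : inS S e.
    apply: (inS_fw (he e)); first by rewrite ee; exact: ieR.
    by move=> x; rewrite !inE.
  have [e'' ee''] := iePR hin; exists e''; apply: ie_inj; by rewrite hg' ee'' ee.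
have hse : forall e, same_ends (ends (R G S) e) (mapp f' (ends (R K T) (g' e))).
  move=> e; apply: (sub_se (f := f) hf'); rewrite hg'; exact: he.
case: (boolP (inS T e0)) => he0.
- right; right; right.
  have [e0' ee0] := iePR he0.
  exists e0'; split.
    move=> e hne; rewrite -(same_ends_inj _ _ (@iv_inj _ T (within T))) !ends_sub ee0.
    apply: nopar; by apply: contra_neq hne => h; apply: ie_inj; rewrite h ee0.
  exists f', g'; split; [exact: f's|split; [|split; [exact: g'i|split; [|split]]]].
  + move=> x y; rewrite -(same_ends_inj _ _ (@iv_inj _ T (within T))) ends_sub ee0 /mapp /=.
    split.
      move=> /(congr1 iv); rewrite !hf' => /fiff [/iv_inj ->|h]; [by left | by right].
    move=> h; apply: iv_inj; rewrite !hf'; apply/fiff.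
    by case: h => [->|h]; [left | right].
  + move=> e; apply/negP => /eqP /(congr1 ie); rewrite hg' ee0; apply/eqP; exact: ge0.
  + move=> e' hne; apply: g's; by apply: contra_neq hne => h; apply: ie_inj; rewrite h ee0.
  + exact: hse.
- left.
  have f'i : injective f'.
    move=> x y /(congr1 iv); rewrite !hf' => /fiff [/iv_inj //|h].
    case/negP: he0; move: h (ivS x) (ivS y); rewrite /inS.
    by case: (ends K e0) => a c /= /same_endsP [] [-> ->] /= -> ->.
  have [h hK Kh] := inj_surj_bij f'i f's.
  have g'b : bijective g'.
    apply: inj_surj_bij => // e'; apply: g's.
    by apply: contraNneq he0 => <-; exact: ieR.
  exists h, g'; split; [by exists f'|split; first exact: g'b].
  move=> e; rewrite same_endsC.
  have := same_ends_map h (hse e).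
  suff -> : mapp h (mapp f' (ends (R K T) (g' e))) = ends (R K T) (g' e) by [].
  by case: (ends _ _) => a c; rewrite /mapp /= !hK.
Qed.

End Cases.

Lemma restrict_step G K (nu : 'I_(nv G) -> bool) : minor_step G K -> rs_concl K nu.
Proof.
case=> wG [|[|[|]]].
- exact: rs_iso.
- exact: rs_delv.
- exact: rs_dele.
- exact: rs_contract.
Qed.

Lemma restrict_minor G H : minor G H -> forall nu : 'I_(nv G) -> bool,
  exists mu : 'I_(nv H) -> bool, forall b, (exists x, nu x = b) ->
    minor (R G (lab nu b)) (R H (lab mu b)).
Proof.
elim=> [{}H|{}G K {}H st _ IH] nu.
  by exists nu => b _; exact: minor_refl.
have [muK hK] := restrict_step nu st.
have [mu hmu] := IH muK.
exists mu => b hb.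
have st' := hK b hb.
have hy : exists y, muK y = b.
  have := step_nv st'; rewrite nv_sub card_gt0 => /set0Pn [y]; rewrite inE => /eqP <-.
  by exists y.
exact: minor_cons st' (hmu b hy).
Qed.


Lemma split_lshift m n (i : 'I_m) : split (lshift n i) = inl i.
Proof. exact: (unsplitK (inl i)). Qed.
Lemma split_rshift m n (i : 'I_n) : split (rshift m i) = inr i.
Proof. exact: (unsplitK (inr i)). Qed.

Lemma ordsumP m n (x : 'I_(m + n)) :
  (exists a, x = lshift n a) \/ (exists b, x = rshift m b).
Proof.
rewrite -(splitK x); case: (split x) => [a|b]; [left; by exists a | right; by exists b].
Qed.

Lemma ends_dul A X e : ends (dunion A X) (lshift (ne X) e) = mapp (@lshift (nv A) (nv X)) (ends A e).
Proof. by rewrite /= split_lshift. Qed.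
Lemma ends_dur A X e : ends (dunion A X) (rshift (ne A) e) = mapp (@rshift (nv A) (nv X)) (ends X e).
Proof. by rewrite /= split_rshift. Qed.

Lemma wf_dunion A X : wf A -> wf X -> wf (dunion A X).
Proof.
case/andP=> hA /forallP lA /andP [hX /forallP lX]; apply/andP; split.
  by rewrite /= addn_gt0 hA.
apply/forallP => e; case: (ordsumP e) => [[a ->]|[b ->]].
- rewrite ends_dul; move: (lA a); case: (ends A a) => u v /=; by rewrite eq_lshift.
- rewrite ends_dur; move: (lX b); case: (ends X b) => u v /=; by rewrite eq_rshift.
Qed.

Lemma iso_sym A B : iso A B -> iso B A.
Proof.
case=> f [g [[fi fK Kf] [[gi gK Kg] he]]].
exists fi, gi; split; [by exists f|split; first by exists g].
move=> e'; have := same_ends_map fi (he (gi e')); rewrite Kg same_endsC.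
suff -> : mapp fi (mapp f (ends A (gi e'))) = ends A (gi e') by [].
by case: (ends _ _) => a c; rewrite /mapp /= !fK.
Qed.

Lemma minor_nv G H : minor G H -> 0 < nv G -> 0 < nv H.
Proof. by elim=> // {}G K {}H st _ IH _; apply: IH; apply: step_nv st. Qed.

Lemma emb_iso_R A D (hv : 'I_(nv A) -> 'I_(nv D)) (he : 'I_(ne A) -> 'I_(ne D))
  (S : {set 'I_(nv D)}) :
  emb hv he -> (forall y, (y \in S) <-> exists x, hv x = y) ->
  (forall e', inS S e' -> exists e, he e = e') ->
  iso A (R D S).
Proof.
case=> hvi hei hE hS hsurj.
have hvS : forall x, hv x \in S by move=> x; apply/hS; exists x.
have heS : forall e, he e \in within S.
  move=> e; rewrite inE /inS hE; case: (ends A e) => a b /=; by rewrite !hvS.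
pose f (x : 'I_(nv A)) : 'I_(nv (R D S)) := enum_rank (exist (fun y => y \in S) (hv x) (hvS x)).
have hf : forall x, iv (f x) = hv x by move=> x; rewrite /iv enum_rankK.
have heS' : forall e, (he e \in within S) && inS S (he e).
  by move=> e; rewrite heS /=; have := heS e; rewrite inE.
pose g (e : 'I_(ne A)) : 'I_(ne (R D S)) :=
  enum_rank (exist (fun y => (y \in within S) && inS S y) (he e) (heS' e)).
have hg : forall e, ie (g e) = he e by move=> e; rewrite /ie enum_rankK.
exists f, g; split; [|split].
- apply: inj_surj_bij.
    by move=> x y /(congr1 iv); rewrite !hf => /hvi.
  move=> y; have [x ex] := (proj1 (hS (iv y))) (ivS y).
  by exists x; apply: iv_inj; rewrite hf.
- apply: inj_surj_bij.
    by move=> x y /(congr1 ie); rewrite !hg => /hei.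
  move=> e'; have [e ee] := hsurj _ (ieR e').
  by exists e; apply: ie_inj; rewrite hg.
- move=> e; rewrite -(same_ends_inj _ _ (@iv_inj D S (within S))) ends_sub hg hE.
  suff -> : mapp iv (mapp f (ends A e)) = mapp hv (ends A e) by exact: same_ends_refl.
  by case: (ends A e) => a b; rewrite /mapp /= !hf.
Qed.

Definition side A X (v : 'I_(nv (dunion A X))) : bool := v < nv A.

Lemma iso_side_l A X : iso A (R (dunion A X) (lab (@side A X) true)).
Proof.
apply: (@emb_iso_R A (dunion A X) (@lshift (nv A) (nv X)) (@lshift (ne A) (ne X)) (lab (@side A X) true)).
- split; [exact: lshift_inj | exact: lshift_inj | exact: ends_dul].
- move=> y; rewrite inE /side; split.
    case: (ordsumP y) => [[a ->]|[b ->]] /=; first by exists a.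
    by rewrite ltnNge leq_addr.
  by case=> x <- /=; rewrite ltn_ord.
- move=> e'; case: (ordsumP e') => [[a ->]|[b ->]]; first by exists a.
  rewrite /inS ends_dur; case: (ends X b) => u v /=; rewrite !inE /side /=.
  by rewrite ltnNge leq_addr.
Qed.

Lemma iso_side_r A X : iso X (R (dunion A X) (lab (@side A X) false)).
Proof.
apply: (@emb_iso_R X (dunion A X) (@rshift (nv A) (nv X)) (@rshift (ne A) (ne X)) (lab (@side A X) false)).
- split; [exact: rshift_inj | exact: rshift_inj | exact: ends_dur].
- move=> y; rewrite inE /side; split.
    case: (ordsumP y) => [[a ->]|[b ->]] /=; last by exists b.
    by rewrite ltn_ord.
  by case=> x <- /=; rewrite ltnNge leq_addr.
- move=> e'; case: (ordsumP e') => [[a ->]|[b ->]]; last by exists b.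
  rewrite /inS ends_dul; case: (ends A a) => u v /=; rewrite !inE /side /=.
  by rewrite ltn_ord.
Qed.

Lemma walk_edges G (x : 'I_(nv G)) s : walk x s ->
  forall p, p \in s -> ((ends G p.1).1 \in x :: map snd s) && ((ends G p.1).2 \in x :: map snd s).
Proof.
elim: s x => //= [[e w] s IH] x /andP [hse hw] p; rewrite inE => /orP [/eqP ->|hp] /=.
  move: hse; case/same_endsP => -> /=; by rewrite !inE !eqxx ?orbT.
have /andP [h1 h2] := IH _ hw _ hp.
move: h1 h2; rewrite !inE => -> ->; by rewrite !orbT.
Qed.

Lemma usp_sub H (S : {set 'I_(nv H)}) x s :
  is_usp x s -> {subset x :: map snd s <= S} -> (size s).+1 <= usp (R H S).
Proof.
move=> hu hsub.
have hx : x \in S by apply: hsub; exact: mem_head.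
have [x' ex] := ivP (within S) hx.
have hw : walk (iv x') s by rewrite ex; case/andP: (proj1 hu).
have [s' es] : exists s' : steps (R H S), mapS iv ie s' = s.
  apply: (lift_walk hw) => p hp; apply/andP; split.
    by apply: hsub; rewrite inE (map_f snd hp) orbT.
  rewrite inE /inS; have /andP [h1 h2] := walk_edges hw hp.
  by rewrite ex in h1 h2; rewrite !hsub.
have := usp_ge (usp_emb (emb_sub _ _) (ltac:(rewrite es ex; exact: hu) : is_usp (iv x') (mapS iv ie s'))).
by rewrite -es /mapS size_map.
Qed.


Lemma ge_dir A X H : wf A -> wf X -> wf H -> minor (dunion A X) H ->
  spfloor A + spfloor X <= sp H.
Proof.
move=> wA wX wH m.
have wD := wf_dunion wA wX.
have [mu hmu] := restrict_minor m (@side A X).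
have hnH : 0 < nv H by case/andP: wH.
have [x [s [hu hs]]] := usp_attained hnH.
set P := [set v | v \in x :: map snd s].
have hPc : #|P| = (size s).+1.
  rewrite cardsE (card_uniqP (proj2 (andP (proj1 hu)))) /= size_map //.
have hex : forall b, exists v, @side A X v = b.
  case.
  - have a0 : 'I_(nv A) by case/andP: wA => h _; exact: Ordinal h.
    by exists (lshift (nv X) a0); rewrite /side /= ltn_ord.
  - have a0 : 'I_(nv X) by case/andP: wX => h _; exact: Ordinal h.
    by exists (rshift (nv A) a0); rewrite /side /= ltnNge leq_addr.
have key : forall b, let Sb := lab mu b :|: P in
    minor (R (dunion A X) (lab (@side A X) b)) (R H Sb) /\ wf (R H Sb) /\
    (size s).+1 <= usp (R H Sb).
  move=> b Sb.
  have mb := hmu b (hex b).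
  have hne : lab mu b != set0.
    have := minor_nv mb; rewrite !nv_sub !card_gt0; apply.
    exact: lab_ne (hex b).
  split; last split.
  - apply: minor_trans mb _; apply: sub_minor => //.
    + by move=> e; rewrite inE.
    + exact: subsetUl.
    + apply/subsetP => e; rewrite /Sb !inE /inS !inE => /andP [h1 h2].
      by rewrite h1 h2.
    + by move=> e; rewrite inE.
  - apply: wf_sub => //; apply/set0Pn; exists x; by rewrite /Sb /P !inE eqxx !orbT.
  - apply: usp_sub hu _ => v hv; by rewrite /Sb /P !inE -(in_cons x) hv orbT.
have [m1 [w1 u1]] := key true.
have [m2 [w2 u2]] := key false.
have hA : spfloor A <= sp (R H (lab mu true :|: P)).
  apply: spfloor_le w1 _.
  apply: minor_cons m1.
  apply: iso_step (iso_side_l A X) _; exact: wf_R (hex true).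
have hX : spfloor X <= sp (R H (lab mu false :|: P)).
  apply: spfloor_le w2 _.
  apply: minor_cons m2.
  apply: iso_step (iso_side_r A X) _; exact: wf_R (hex false).
have hcard : #|lab mu true :|: P| + #|lab mu false :|: P| <= nv H + #|P|.
  rewrite -cardsUI; apply: leq_add.
    by have := max_card (mem (lab mu true :|: P :|: (lab mu false :|: P))); rewrite card_ord.
  apply: subset_leq_card; apply/subsetP => v; rewrite !inE.
  by case/andP => /orP [/eqP h1|->] // /orP [/eqP h2|->] //; move: h1 h2 => ->.
have c1 := subset_leq_card (subsetUr (lab mu true) P).
have c2 := subset_leq_card (subsetUr (lab mu false) P).
move: hA hX; rewrite /sp !nv_sub -hs; rewrite hPc in hcard c1 c2.
move: hcard c1 c2 u1 u2; clear.
set a := #|lab mu true :|: P|; set b := #|lab mu false :|: P|; set u := usp _; set v := usp _.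
clearbody a b u v; move: (spfloor A) (spfloor X) => sA sX; lia.
Qed.


Definition sumv m m' n (f : 'I_m -> 'I_m') (v : 'I_(m + n)) : 'I_(m' + n) :=
  match split v with inl a => lshift n (f a) | inr b => rshift m' b end.
Arguments sumv {m m'} n f v.

Lemma sumv_l m m' n (f : 'I_m -> 'I_m') a : sumv n f (lshift n a) = lshift n (f a).
Proof. by rewrite /sumv split_lshift. Qed.
Lemma sumv_r m m' n (f : 'I_m -> 'I_m') b : sumv n f (rshift m b) = rshift m' b.
Proof. by rewrite /sumv split_rshift. Qed.

Lemma lr_neq m n (a : 'I_m) (b : 'I_n) : lshift n a <> rshift m b.
Proof. by move/eqP; rewrite eq_lrshift. Qed.

Lemma sumv_inj m m' n (f : 'I_m -> 'I_m') : injective f -> injective (sumv n f).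
Proof.
move=> fi x y; case: (ordsumP x) => [[a ->]|[b ->]]; case: (ordsumP y) => [[a' ->]|[b' ->]];
rewrite ?sumv_l ?sumv_r.
- by move/lshift_inj/fi ->.
- by move/lr_neq.
- by move/esym/lr_neq.
- by move/rshift_inj ->.
Qed.

Lemma sumv_surj m m' n (f : 'I_m -> 'I_m') : (forall y, exists x, f x = y) ->
  forall y, exists x, sumv n f x = y.
Proof.
move=> fs y; case: (ordsumP y) => [[a ->]|[b ->]].
- by have [x ex] := fs a; exists (lshift n x); rewrite sumv_l ex.
- by exists (rshift m b); rewrite sumv_r.
Qed.

Lemma sumv_bij m m' n (f : 'I_m -> 'I_m') : bijective f -> bijective (sumv n f).
Proof.
move=> fb; apply: inj_surj_bij; [exact: sumv_inj (bij_inj fb) | exact: sumv_surj (bij_surj fb)].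
Qed.

Lemma se_lr m n (p : 'I_m * 'I_m) (q : 'I_n * 'I_n) :
  same_ends (mapp (@lshift m n) p) (mapp (@rshift m n) q) = false.
Proof.
case: p q => a b [c d]; rewrite /same_ends /mapp /= !xpair_eqE.
by rewrite !eq_lrshift.
Qed.

Lemma dunion_se K K' X (f : 'I_(nv K) -> 'I_(nv K')) (g : 'I_(ne K) -> 'I_(ne K')) :
  (forall e, same_ends (ends K' (g e)) (mapp f (ends K e))) ->
  forall e, same_ends (ends (dunion K' X) (sumv (ne X) g e))
                      (mapp (sumv (nv X) f) (ends (dunion K X) e)).
Proof.
move=> he e; case: (ordsumP e) => [[a ->]|[b ->]]; rewrite ?sumv_l ?sumv_r.
- rewrite !ends_dul; have := same_ends_map (@lshift (nv K') (nv X)) (he a).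
  suff -> : mapp (sumv (nv X) f) (mapp (lshift (nv X)) (ends K a)) =
            mapp (lshift (nv X)) (mapp f (ends K a)) by [].
  by case: (ends K a) => u v; rewrite /mapp /= !sumv_l.
- rewrite !ends_dur; case: (ends X b) => u v; rewrite /mapp /= !sumv_r.
  exact: same_ends_refl.
Qed.

Lemma dunion_se' K K' X (f : 'I_(nv K') -> 'I_(nv K)) (g : 'I_(ne K) -> 'I_(ne K')) :
  (forall e, same_ends (ends K e) (mapp f (ends K' (g e)))) ->
  forall e, same_ends (ends (dunion K X) e)
                      (mapp (sumv (nv X) f) (ends (dunion K' X) (sumv (ne X) g e))).
Proof.
move=> he e; case: (ordsumP e) => [[a ->]|[b ->]]; rewrite ?sumv_l ?sumv_r.
- rewrite !ends_dul; have := same_ends_map (@lshift (nv K) (nv X)) (he a).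
  suff -> : mapp (sumv (nv X) f) (mapp (lshift (nv X)) (ends K' (g a))) =
            mapp (lshift (nv X)) (mapp f (ends K' (g a))) by [].
  by case: (ends K' (g a)) => u v; rewrite /mapp /= !sumv_l.
- rewrite !ends_dur; case: (ends X b) => u v; rewrite /mapp /= !sumv_r.
  exact: same_ends_refl.
Qed.

Lemma lift_step K K' X : minor_step K K' -> wf X -> minor_step (dunion K X) (dunion K' X).
Proof.
case=> wK st wX; split; first exact: wf_dunion.
case: st => [|[|[|]]].
- case=> f [g [fb [gb he]]]; left.
  exists (sumv (nv X) f), (sumv (ne X) g); split; [exact: sumv_bij|split; first exact: sumv_bij].
  exact: dunion_se.
- case=> v [hv [f [g [fi [fv [fs [gb he]]]]]]]; right; left.
  exists (lshift (nv X) v); split.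
    move=> e; case: (ordsumP e) => [[a ->]|[b ->]].
    + rewrite ends_dul; have [h1 h2] := hv a; by rewrite /mapp /= !eq_lshift.
    + by rewrite ends_dur /mapp /= !eq_lrshift.
  exists (sumv (nv X) f), (sumv (ne X) g); split; first exact: sumv_inj.
  split; last split; last split; [| |exact: sumv_bij|exact: dunion_se].
  + move=> y; case: (ordsumP y) => [[a ->]|[b ->]]; rewrite ?sumv_l ?sumv_r.
      by rewrite eq_lshift.
    by rewrite eq_rlshift.
  + move=> y; case: (ordsumP y) => [[a ->]|[b ->]] hy.
    * have [x ex] := fs a (ltac:(by move: hy; rewrite eq_lshift)).
      by exists (lshift (nv X) x); rewrite sumv_l ex.
    * by exists (rshift (nv K) b); rewrite sumv_r.
- case=> e0 [f [g [fb [gi [ge0 [gs he]]]]]]; right; right; left.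
  exists (lshift (ne X) e0).
  exists (sumv (nv X) f), (sumv (ne X) g); split; first exact: sumv_bij.
  split; first exact: sumv_inj.
  split; last split; last exact: dunion_se.
  + move=> e; case: (ordsumP e) => [[a ->]|[b ->]]; rewrite ?sumv_l ?sumv_r.
      by rewrite eq_lshift.
    by rewrite eq_rlshift.
  + move=> e; case: (ordsumP e) => [[a ->]|[b ->]] hy.
    * have [x ex] := gs a (ltac:(by move: hy; rewrite eq_lshift)).
      by exists (lshift (ne X) x); rewrite sumv_l ex.
    * by exists (rshift (ne K) b); rewrite sumv_r.
- case=> e0 [nopar [f [g [fs [fiff [gi [ge0 [gs he]]]]]]]]; right; right; right.
  exists (lshift (ne X) e0); split.
    move=> e; case: (ordsumP e) => [[a ->]|[b ->]] hne.
    + rewrite !ends_dul same_ends_inj; last exact: lshift_inj.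
      apply: nopar; by move: hne; rewrite eq_lshift.
    + by rewrite ends_dur ends_dul same_endsC se_lr.
  exists (sumv (nv X) f), (sumv (ne X) g); split; first exact: sumv_surj.
  split; [|split; [exact: sumv_inj gi|]]; last first.
  + split; last split; last exact: dunion_se'.
    * move=> e; case: (ordsumP e) => [[a ->]|[b ->]]; rewrite ?sumv_l ?sumv_r.
        by rewrite eq_lshift.
      by rewrite eq_rlshift.
    * move=> e; case: (ordsumP e) => [[a ->]|[b ->]] hy.
      - have [x ex] := gs a (ltac:(by move: hy; rewrite eq_lshift)).
        by exists (lshift (ne X) x); rewrite sumv_l ex.
      - by exists (rshift (ne K) b); rewrite sumv_r.
  + move=> x y; rewrite ends_dul.
    case: (ordsumP x) => [[a ->]|[b ->]]; case: (ordsumP y) => [[a' ->]|[b' ->]];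
      rewrite ?sumv_l ?sumv_r.
    * rewrite -[(lshift _ a, lshift _ a')]/(mapp (lshift (nv X)) (a, a')) same_ends_inj;
        last exact: lshift_inj.
      split.
        by move/lshift_inj/fiff => [->|h]; [left | right].
      by case=> [/lshift_inj ->|h] //; congr lshift; apply/fiff; right.
    * split; first by move/lr_neq.
      case=> [/lr_neq //|]; rewrite /same_ends; case: (ends K' e0) => u v.
      by rewrite /mapp /= !xpair_eqE !eq_rlshift !andbF.
    * split; first by move/esym/lr_neq.
      case=> [/esym/lr_neq //|]; rewrite /same_ends; case: (ends K' e0) => u v.
      by rewrite /mapp /= !xpair_eqE !eq_rlshift.
    * split; first by move/rshift_inj ->; left.
      case=> [/rshift_inj -> //|]; rewrite /same_ends; case: (ends K' e0) => u v.
      by rewrite /mapp /= !xpair_eqE !eq_rlshift.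
Qed.

Lemma lift_minor K K' X : minor K K' -> wf X -> minor (dunion K X) (dunion K' X).
Proof.
move=> m wX; elim: m => [H|G M H st _ IH]; first exact: minor_refl.
exact: minor_cons (lift_step st wX) IH.
Qed.

Definition swapv m n (v : 'I_(m + n)) : 'I_(n + m) :=
  match split v with inl a => rshift n a | inr b => lshift m b end.

Lemma swapv_l m n a : swapv (lshift n a : 'I_(m + n)) = rshift n a.
Proof. by rewrite /swapv split_lshift. Qed.
Lemma swapv_r m n b : swapv (rshift m b : 'I_(m + n)) = lshift m b.
Proof. by rewrite /swapv split_rshift. Qed.

Lemma swapvK m n : cancel (@swapv m n) (@swapv n m).
Proof.
move=> x; case: (ordsumP x) => [[a ->]|[b ->]]; by rewrite ?swapv_l ?swapv_r ?swapv_l.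
Qed.

Lemma iso_swap A X : iso (dunion A X) (dunion X A).
Proof.
exists (@swapv (nv A) (nv X)), (@swapv (ne A) (ne X)).
split; [by exists (@swapv (nv X) (nv A)); move=> x; rewrite swapvK|split].
  by exists (@swapv (ne X) (ne A)); move=> x; rewrite swapvK.
move=> e; case: (ordsumP e) => [[a ->]|[b ->]]; rewrite ?swapv_l ?swapv_r.
- rewrite ends_dur ends_dul; case: (ends A a) => u v; rewrite /mapp /= !swapv_l.
  exact: same_ends_refl.
- rewrite ends_dul ends_dur; case: (ends X b) => u v; rewrite /mapp /= !swapv_r.
  exact: same_ends_refl.
Qed.

Definition addedge (G : mgraph) (u v : 'I_(nv G)) : mgraph :=
  @MGraph (nv G) (ne G + 1)
    (fun e => match split e with inl e' => ends G e' | inr _ => (u, v) end).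

Arguments addedge : clear implicits.
Lemma del_addedge G u v : del_edge G (addedge G u v).
Proof.
exists (rshift (ne G) ord0), id, (@lshift (ne G) 1).
split; first by exists id.
split; first exact: lshift_inj.
split; first by move=> e; rewrite eq_lrshift.
split.
  move=> e; case: (ordsumP e) => [[a ->]|[b ->]] h; first by exists a.
  by move: h; rewrite (ord1 b) eqxx.
by move=> e; rewrite /= split_lshift mapp_id; exact: same_ends_refl.
Qed.


Lemma walk_cat G (x : 'I_(nv G)) s1 s2 :
  walk x (s1 ++ s2) = walk x s1 && walk (endp x s1) s2.
Proof. by elim: s1 x => //= [[e w] s1 IH] x; rewrite IH andbA. Qed.

Lemma endp_cat G (x : 'I_(nv G)) s1 s2 : endp x (s1 ++ s2) = endp (endp x s1) s2.
Proof. by rewrite /endp map_cat last_cat. Qed.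

Lemma path_prefix G (x : 'I_(nv G)) s1 s2 : is_path x (s1 ++ s2) -> is_path x s1.
Proof.
case/andP; rewrite walk_cat => /andP [w1 _]; rewrite /is_path w1 map_cat -cat_cons cat_uniq.
by case/andP.
Qed.

Lemma path_suffix G (x : 'I_(nv G)) s1 s2 : is_path x (s1 ++ s2) -> is_path (endp x s1) s2.
Proof.
case/andP; rewrite walk_cat => /andP [_ w2]; rewrite /is_path w2 map_cat -cat_cons cat_uniq.
case/and3P => _ hn u2 /=; rewrite u2 andbT.
apply: contra hn => h; apply/hasP; exists (endp x s1) => //.
exact: mem_last.
Qed.

Lemma map_snd_mapS (A B : mgraph) (hv : 'I_(nv A) -> 'I_(nv B)) (he : 'I_(ne A) -> 'I_(ne B)) s :
  map snd (mapS hv he s) = map hv (map snd s).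
Proof. by rewrite /mapS -!map_comp. Qed.

Lemma same_ends_snd (T : eqType) (a b c w : T) : same_ends (a, b) (c, w) -> w = b \/ w = a.
Proof. by case/same_endsP => [] [-> ->]; auto. Qed.

Lemma same_endsE (T : eqType) (a b c d : T) :
  same_ends (a, b) (c, d) -> (a = c /\ b = d) \/ (a = d /\ b = c).
Proof. by case/same_endsP => [] [-> ->]; auto. Qed.

Lemma endp_cons G (x : 'I_(nv G)) e w s : endp x ((e, w) :: s) = endp w s.
Proof. by []. Qed.

Lemma walk_cons G (x : 'I_(nv G)) e w s :
  walk x ((e, w) :: s) = same_ends (ends G e) (x, w) && walk w s.
Proof. by []. Qed.

Section Bridge.
Variables (H1 H2 : mgraph) (y1 : 'I_(nv H1)) (x2 : 'I_(nv H2)).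

Definition bridge := addedge (dunion H1 H2) (@lshift (nv H1) (nv H2) y1) (@rshift (nv H1) (nv H2) x2).
Definition Lv : 'I_(nv H1) -> 'I_(nv bridge) := @lshift (nv H1) (nv H2).
Definition Rv : 'I_(nv H2) -> 'I_(nv bridge) := @rshift (nv H1) (nv H2).
Definition Le (e : 'I_(ne H1)) : 'I_(ne bridge) := lshift 1 (@lshift (ne H1) (ne H2) e).
Definition Re (e : 'I_(ne H2)) : 'I_(ne bridge) := lshift 1 (@rshift (ne H1) (ne H2) e).
Definition eb : 'I_(ne bridge) := rshift (ne H1 + ne H2) ord0.

Lemma ends_Le e : ends bridge (Le e) = mapp Lv (ends H1 e).
Proof. by rewrite /= !split_lshift. Qed.
Lemma ends_Re e : ends bridge (Re e) = mapp Rv (ends H2 e).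
Proof. by rewrite /= split_lshift split_rshift. Qed.
Lemma ends_eb : ends bridge eb = (Lv y1, Rv x2).
Proof. by rewrite /= split_rshift. Qed.

Lemma emb1 : emb (B := bridge) Lv Le.
Proof.
split; [exact: lshift_inj| |exact: ends_Le].
by move=> a b /lshift_inj /lshift_inj.
Qed.
Lemma emb2 : emb (B := bridge) Rv Re.
Proof.
split; [exact: rshift_inj| |exact: ends_Re].
by move=> a b /lshift_inj /rshift_inj.
Qed.

Lemma edgeB (e : 'I_(ne bridge)) : (exists e1, e = Le e1) \/ (exists e2, e = Re e2) \/ e = eb.
Proof.
case: (ordsumP e) => [[a ->]|[b ->]].
- case: (ordsumP a) => [[a1 ->]|[a2 ->]]; [left; by exists a1 | right; left; by exists a2].
- by right; right; rewrite /eb (ord1 b).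
Qed.

Lemma LRneq a b : Lv a <> Rv b.
Proof. exact: lr_neq. Qed.

Lemma has_LR (l1 : seq 'I_(nv H1)) (l2 : seq 'I_(nv H2)) :
  has (mem (map Lv l1)) (map Rv l2) = false.
Proof.
elim: l2 => //= a l2 ->; rewrite orbF; apply/mapP => [[w _ /esym /LRneq]] //.
Qed.

Lemma side2 (s : steps bridge) c : walk (Rv c) s -> Lv y1 \notin map snd s ->
  exists t, s = mapS Rv Re t.
Proof.
elim: s c => [|[e w] s IH] c; first by exists [::].
rewrite walk_cons map_cons inE negb_or => /andP [hse hw] /andP [hnw hns].
case: (edgeB e) => [[e1 ee]|[[e2 ee]|ee]]; subst e.
- move: hse; rewrite ends_Le; case: (ends H1 e1) => u v /=.
  by case/same_endsE => [[/LRneq]|[_ /LRneq]].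
- move: hse; rewrite ends_Re; case: (ends H2 e2) => u v /= /same_ends_snd hwd.
  have [d ed] : exists d, w = Rv d by case: hwd => ->; eexists.
  subst w; have [t et] := IH d hw hns.
  by exists ((e2, d) :: t); rewrite /= et.
- move: hse; rewrite ends_eb; case/same_endsE => [[/LRneq //]|[ew _]].
  by rewrite ew eqxx in hnw.
Qed.

Lemma side1 (s : steps bridge) a b : walk (Lv a) s -> uniq (Lv a :: map snd s) ->
  endp (Lv a) s = Rv b ->
  exists t1 t2, s = mapS Lv Le t1 ++ (eb, Rv x2) :: mapS Rv Re t2 /\ endp a t1 = y1.
Proof.
elim: s a => [|[e w] s IH] a.
  by move=> _ _ /LRneq.
rewrite walk_cons map_cons cons_uniq => /andP [hse hw] /andP [hna hu] hend.
case: (edgeB e) => [[e1 ee]|[[e2 ee]|ee]]; subst e.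
- move: hse; rewrite ends_Le; case: (ends H1 e1) => u v /= /same_ends_snd hwd.
  have [d ed] : exists d, w = Lv d by case: hwd => ->; eexists.
  subst w; have [t1 [t2 [et ey]]] := IH d hw hu hend.
  by exists ((e1, d) :: t1), t2; rewrite /= et.
- move: hse; rewrite ends_Re; case: (ends H2 e2) => u v /=.
  by case/same_endsE => [[/esym/LRneq]|[_ /esym/LRneq]].
- move: hse; rewrite ends_eb; case/same_endsE => [[/lshift_inj ea ew]|[_ /esym/LRneq //]].
  subst a w.
  have hns : Lv y1 \notin map snd s by move: hna; rewrite inE negb_or => /andP [].
  have [t2 et2] := side2 hw hns.
  by exists [::], t2; rewrite et2.
Qed.

Variables (x1 : 'I_(nv H1)) (P1 : steps H1) (P2 : steps H2).
Hypothesis hP1 : is_usp x1 P1.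
Hypothesis hP2 : is_usp x2 P2.
Hypothesis hy1 : endp x1 P1 = y1.

Definition Q : steps bridge := mapS Lv Le P1 ++ (eb, Rv x2) :: mapS Rv Re P2.

Lemma Q_path : is_path (Lv x1) Q.
Proof.
apply/andP; split.
- rewrite walk_cat (walk_emb emb1) (proj1 (andP (proj1 hP1))) andTb.
  rewrite (endp_emb Lv Le) hy1 walk_cons ends_eb same_ends_refl andTb.
  by rewrite (walk_emb emb2) (proj1 (andP (proj1 hP2))).
- rewrite /Q map_cat map_cons !map_snd_mapS -cat_cons cat_uniq.
  change ((eb, Rv x2).2) with (Rv x2).
  rewrite -!map_cons has_LR.
  have Li : injective Lv by exact: lshift_inj.
  have Ri : injective Rv by exact: rshift_inj.
  rewrite (map_inj_uniq Li) (map_inj_uniq Ri).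
  by rewrite (proj2 (andP (proj1 hP1))) (proj2 (andP (proj1 hP2))).
Qed.

Lemma Q_usp : is_usp (Lv x1) Q.
Proof.
split; first exact: Q_path.
have key : forall Q', is_path (Lv x1) Q' -> endp (Lv x1) Q' = endp (Lv x1) Q ->
    exists t1 t2, Q' = mapS Lv Le t1 ++ (eb, Rv x2) :: mapS Rv Re t2 /\
      is_path x1 t1 /\ endp x1 t1 = endp x1 P1 /\ is_path x2 t2 /\ endp x2 t2 = endp x2 P2.
  move=> Q' hp hend.
  have hend' : endp (Lv x1) Q' = Rv (endp x2 P2).
    rewrite hend /Q endp_cat.
    by rewrite endp_cons (endp_emb Rv Re).
  have [t1 [t2 [et ey]]] := side1 (proj1 (andP hp)) (proj2 (andP hp)) hend'.
  exists t1, t2; split=> //.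
  have hp1 : is_path x1 t1.
    rewrite -(path_emb emb1); apply: (@path_prefix _ _ _ ((eb, Rv x2) :: mapS Rv Re t2)); rewrite -et; exact: hp.
  have hp2' : is_path (Rv x2) (mapS Rv Re t2).
    have := hp; rewrite et -cat_rcons -cats1 => /path_suffix.
    by rewrite endp_cat; apply.
  have hp2 : is_path x2 t2 by rewrite -(path_emb emb2).
  split=> //; split; first by rewrite ey.
  split=> //.
  apply: (@rshift_inj (nv H1)); change (Rv (endp x2 t2) = Rv (endp x2 P2)).
  by rewrite -hend' et endp_cat endp_cons (endp_emb Rv Re).
have szQ : size Q = size P1 + (size P2).+1 by rewrite /Q size_cat /= !size_map.
split.
- move=> Q' hp hend; have [t1 [t2 [-> [h1 [e1 [h2 e2]]]]]] := key Q' hp hend.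
  rewrite szQ size_cat /= !size_map.
  have := (proj1 (proj2 hP1)) t1 h1 e1; have := (proj1 (proj2 hP2)) t2 h2 e2; lia.
- move=> Q' hp hend hs; have [t1 [t2 [eQ [h1 [e1 [h2 e2]]]]]] := key Q' hp hend.
  move: hs; rewrite eQ szQ size_cat /= !size_map => hs.
  have l1 := (proj1 (proj2 hP1)) t1 h1 e1; have l2 := (proj1 (proj2 hP2)) t2 h2 e2.
  have s1 : size t1 = size P1 by lia.
  have s2 : size t2 = size P2 by lia.
  have -> : t1 = P1 by apply: (proj2 (proj2 hP1)).
  have -> : t2 = P2 by apply: (proj2 (proj2 hP2)).
  by [].
Qed.

End Bridge.


Lemma wf_bridge H1 H2 y1 x2 : wf H1 -> wf H2 -> wf (@bridge H1 H2 y1 x2).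
Proof.
case/andP=> hn1 /forallP l1 /andP [hn2 /forallP l2]; apply/andP; split.
  by rewrite /= addn_gt0 hn1.
apply/forallP => e; case: (edgeB e) => [[e1 ->]|[[e2 ->]|->]].
- rewrite ends_Le; move: (l1 e1); case: (ends H1 e1) => u v /=.
  by apply: contra => /eqP /lshift_inj ->.
- rewrite ends_Re; move: (l2 e2); case: (ends H2 e2) => u v /=.
  by apply: contra => /eqP /rshift_inj ->.
- by rewrite ends_eb /=; apply/eqP; exact: LRneq.
Qed.

Lemma le_dir G G1 G2 : wf G1 -> wf G2 -> iso G (dunion G1 G2) ->
  spfloor G <= spfloor G1 + spfloor G2.
Proof.
move=> wG1 wG2 hiso.
have wD := wf_dunion wG1 wG2.
have [H1 [wH1 [m1 e1]]] := spfloor_attained wG1.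
have [H2 [wH2 [m2 e2]]] := spfloor_attained wG2.
have [x1 [P1 [u1 s1]]] := usp_attained (proj1 (andP wH1)).
have [x2 [P2 [u2 s2]]] := usp_attained (proj1 (andP wH2)).
set y1 := endp x1 P1.
have hQ := Q_usp u1 u2 (erefl y1).
have hB := usp_ge hQ.
have wB := wf_bridge y1 x2 wH1 wH2.
have mGB : minor G (bridge y1 x2).
  apply: minor_cons (iso_step hiso wD) _.
  apply: minor_trans (lift_minor m1 wG2) _.
  apply: minor_cons (iso_step (iso_swap H1 G2) (wf_dunion wG2 wH1)) _.
  apply: minor_trans (lift_minor m2 wH1) _.
  apply: minor_cons (iso_step (iso_swap H2 H1) (wf_dunion wH1 wH2)) _.
  apply: minor1; split; first exact: wf_dunion.
  by right; right; left; apply: del_addedge.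
have := spfloor_le wB mGB.
rewrite -e1 -e2 /sp.
have l1 := usp_le H1; have l2 := usp_le H2.
move: hB; rewrite /Q size_cat /= !size_map.
rewrite -s1 -s2 in l1 l2 *.
move: l1 l2; clear; move: (spfloor G) (usp (bridge y1 x2)) => a b; lia.
Qed.

Unset Implicit Arguments.

Theorem theorem3p1 (G G1 G2 : mgraph) :
  wf G1 -> wf G2 -> iso G (dunion G1 G2) ->
  spfloor G = spfloor G1 + spfloor G2.
Proof.
move=> wG1 wG2 hiso.
have wD := wf_dunion wG1 wG2.
have wG := wf_iso hiso wD.
apply/eqP; rewrite eqn_leq le_dir //=.
have [H [wH [mGH eH]]] := spfloor_attained wG.
rewrite -eH; apply: ge_dir => //.
exact: minor_cons (iso_step (iso_sym hiso) wG) mGH.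
Qed.
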